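(* $\mathrm{Pol}(\mathbb{M}_1)$ does not satisfy $\Sigma_1$, but $\mathcal{C}_2$ satisfies $\Sigma_1$.
   Context: $\mathbb{M}_1=(\{0,1,2\};\psi_2,\mu_2,\{0\},\{1\},\{2\})$ with $\psi_2=\{(0,1),(1,0),(2,2)\}$ and $\mu_2$ the equivalence relation with classes $\{0,1\},\{2\}$; $\mathcal{C}_2=\mathrm{Pol}(\{0,1\};\neq,\{0\},\{1\})$, where $\mathrm{Pol}$ denotes the clone of all operations preserving the given relations. A clone satisfies $\Sigma_1$ if it contains a ternary operation $f$ that is a quasi majority operation, i.e. $f(x,y,y)\approx f(y,x,y)\approx f(y,y,x)\approx f(y,y,y)$, and additionally satisfies $f(x,y,z)\approx f(z,y,x)$. *)

(* Defs.v *)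
From mathcomp Require Import all_boot.
Set Implicit Arguments. Unset Strict Implicit. Unset Printing Implicit Defensive.

Definition op (T : Type) (n : nat) := ('I_n -> T) -> T.

Definition preserves1 (T : Type) n (f : op T n) (U : T -> bool) : Prop :=
  forall a : 'I_n -> T, (forall i, U (a i)) -> U (f a).

Definition preserves2 (T : Type) n (f : op T n) (R : T -> T -> bool) : Prop :=
  forall a b : 'I_n -> T, (forall i, R (a i) (b i)) -> R (f a) (f b).

Definition clone_pred (T : Type) := forall n, op T n -> Prop.

Definition op3 (T : Type) (f : T -> T -> T -> T) : op T 3 :=
  fun a => f (a (inord 0)) (a (inord 1)) (a (inord 2)).

Definition Sigma1 (T : Type) (C : clone_pred T) : Prop :=
  exists f : T -> T -> T -> T,
    C 3 (op3 f) /\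
    (forall x y, f x y y = f y x y /\ f y x y = f y y x /\ f y y x = f y y y) /\
    (forall x y z, f x y z = f z y x).

Definition psi2 (a b : 'I_3) : bool :=
  ((val a == 0) && (val b == 1)) || ((val a == 1) && (val b == 0))
  || ((val a == 2) && (val b == 2)).
Definition mu2 (a b : 'I_3) : bool := (val a == 2) == (val b == 2).
Definition singl3 (k : nat) (a : 'I_3) : bool := val a == k.

Definition PolM1 : clone_pred 'I_3 := fun n f =>
  [/\ preserves2 f psi2, preserves2 f mu2,
      preserves1 f (singl3 0), preserves1 f (singl3 1) & preserves1 f (singl3 2)].

Definition neq2 (a b : 'I_2) : bool := a != b.
Definition singl2 (k : nat) (a : 'I_2) : bool := val a == k.

Definition C2 : clone_pred 'I_2 := fun n f =>
  [/\ preserves2 f neq2, preserves1 f (singl2 0) & preserves1 f (singl2 1)].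

(* Main.v *)
Require Import Defs.
From mathcomp Require Import all_boot.

Lemma op3_col (T : Type) (f : T -> T -> T -> T) (x y z : T) :
  op3 f (fun i : 'I_3 => nth x [:: x; y; z] i) = f x y z.
Proof. by rewrite /op3 !inordK. Qed.

Definition o0 : 'I_3 := @Ordinal 3 0 erefl.
Definition o1 : 'I_3 := @Ordinal 3 1 erefl.
Definition o2 : 'I_3 := @Ordinal 3 2 erefl.

Definition maj2 (x y z : 'I_2) : 'I_2 := if x == y then x else z.

Lemma part1 : ~ Sigma1 PolM1.
Proof.
move=> [f [[Hpsi Hmu H0 H1 H2] [Hq Hs]]].
have Hid0 : f o0 o0 o0 = o0.
  have := H0 (fun _ => o0) (fun _ => erefl).
  rewrite /op3 /singl3 => /eqP v; exact: val_inj.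
have H020 : f o0 o2 o0 = o0.
  case: (Hq o2 o0) => _ [b c]; by rewrite b c Hid0.
have P := Hpsi (fun i : 'I_3 => nth o0 [:: o0; o2; o1] i)
                (fun i : 'I_3 => nth o1 [:: o1; o2; o0] i).
have M := Hmu (fun i : 'I_3 => nth o0 [:: o0; o2; o1] i)
                (fun i : 'I_3 => nth o0 [:: o0; o2; o0] i).
rewrite !op3_col in P M.
have {}P := P ltac:(by case=> [[|[|[|]]] ?]).
have {}M := M ltac:(by case=> [[|[|[|]]] ?]).
rewrite (Hs o1) H020 in P M.
move: P M; rewrite /psi2 /mu2.
by case: (f o0 o2 o1) => [[|[|[|]]] ?].
Qed.

Lemma part2 : Sigma1 C2.
Proof.
exists maj2; split; last split.
- split.
  + move=> a b H; rewrite /op3 /maj2 /neq2.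
    have Ha := H (inord 0); have Hb := H (inord 1); have Hc := H (inord 2).
    move: Ha Hb Hc; rewrite /neq2.
    case: (a (inord 0)) => [[|[|]] ?]; case: (a (inord 1)) => [[|[|]] ?];
    case: (a (inord 2)) => [[|[|]] ?]; case: (b (inord 0)) => [[|[|]] ?];
    case: (b (inord 1)) => [[|[|]] ?]; case: (b (inord 2)) => [[|[|]] ?] //.
  + move=> a H; rewrite /op3 /maj2; by case: ifP.
  + move=> a H; rewrite /op3 /maj2; by case: ifP.
- move=> x y; rewrite /maj2.
  by case: x => [[|[|//]] ?]; case: y => [[|[|//]] ?]; do ?split; apply: val_inj.
- move=> x y z; rewrite /maj2.
  by case: x => [[|[|//]] ?]; case: y => [[|[|//]] ?]; case: z => [[|[|//]] ?]; apply: val_inj.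
Qed.

Theorem lemma6p7 : ~ Sigma1 PolM1 /\ Sigma1 C2.
Proof. split; [exact: part1 | exact: part2]. Qed.
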